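(* Let $\Omega\subset\mathbb{R}^2$ be a bounded, simply connected domain with $C^{2+\epsilon}$ boundary, let $\lambda_j$ be any eigenvalue of $-\Delta$ on $\Omega$ with homogeneous Dirichlet boundary condition, with eigenfunction $\phi_j$, and set $P_+=\int_{\Omega_+}\phi_j\,dx$ and $P_-=-\int_{\Omega_-}\phi_j\,dx$, where $\Omega_\pm=\{x\in\Omega:\pm\phi_j(x)>0\}$. Consider $f(\varphi)=\lambda_j\varphi+\vartheta(\varphi)$ with $\vartheta\colon\mathbb{R}\to\mathbb{R}$ satisfying $0<A<\vartheta(\eta)<B$ for all $\eta$, for some constants $A,B$. If $P_+\neq P_-$, then for some ranges of $A$ and $B$ (i.e. there exist constants $0<A<B$ such that for every such $\vartheta$) the problem $-\Delta\varphi=f(\varphi)$ in $\Omega$, $\varphi=0$ on $\partial\Omega$, has no solution $\varphi\in H^1_0(\Omega)$ (with $f(\varphi)\in L^2(\Omega)$, the equation holding weakly). *)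

(* Defs.v *)
(* Points of R^2 are pairs (x1, x2) : R * R,
   with the product (max) norm; Lebesgue measure on R^2 is the product
   measure of the Lebesgue measure on R with itself. *)
From HB Require Import structures.
From mathcomp Require Import all_boot all_order all_algebra.
From mathcomp Require Import all_classical all_reals all_analysis.
Set Implicit Arguments.
Unset Strict Implicit.
Unset Printing Implicit Defensive.
Import Order.TTheory GRing.Theory Num.Theory.
Import numFieldNormedType.Exports.
Local Open Scope classical_set_scope.
Local Open Scope ring_scope.

Section Defs.
Variable R : realType.

Definition leb2 := ((@lebesgue_measure R) \x (@lebesgue_measure R))%E.

Definition e1 : R * R := (1, 0).
Definition e2 : R * R := (0, 1).

Fixpoint iter_dderiv (l : seq (R * R)) (f : R * R -> R) : R * R -> R :=
  match l with
  | [::] => f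
  | v :: l' => 'D_v (iter_dderiv l' f)
  end.

Definition smooth2 (f : R * R -> R) : Prop :=
  forall (l : seq (R * R)) (x : R * R), differentiable (iter_dderiv l f) x.

Definition test_fun (Om : set (R * R)) (psi : R * R -> R) : Prop :=
  smooth2 psi /\
  exists K : set (R * R), compact K /\ K `<=` Om /\
    (forall x, ~ K x -> psi x = 0).

Definition L2 (Om : set (R * R)) (f : R * R -> R) : Prop :=
  measurable_fun Om f /\ leb2.-integrable Om (fun x => (f x ^+ 2)%:E).

Definition weak_deriv (Om : set (R * R)) (v : R * R) (u g : R * R -> R) : Prop :=
  forall psi, test_fun Om psi ->
    Rintegral leb2 Om (fun x => u x * 'D_v psi x)
    = - Rintegral leb2 Om (fun x => g x * psi x).

(* u in H^1_0(Omega) with weak gradient (g1, g2): u in H^1(Omega) and u is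
   an H^1-limit of C_c^infinity(Omega) functions *)
Definition H10_grad (Om : set (R * R)) (u g1 g2 : R * R -> R) : Prop :=
  [/\ L2 Om u /\ L2 Om g1 /\ L2 Om g2, weak_deriv Om e1 u g1, weak_deriv Om e2 u g2 &
  (exists psi : nat -> R * R -> R, (forall n, test_fun Om (psi n)) /\
    (fun n => (\int[leb2]_(x in Om)
        ((psi n x - u x) ^+ 2 + ('D_e1 (psi n) x - g1 x) ^+ 2
          + ('D_e2 (psi n) x - g2 x) ^+ 2)%:E)%E) @ \oo --> 0%E)].

Definition weak_neg_laplacian (Om : set (R * R)) (g1 g2 h : R * R -> R) : Prop :=
  forall psi, test_fun Om psi ->
    Rintegral leb2 Om (fun x => g1 x * 'D_e1 psi x + g2 x * 'D_e2 psi x)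
    = Rintegral leb2 Om (fun x => h x * psi x).

Definition dirichlet_eigenpair (Om : set (R * R)) (lam : R) (phi : R * R -> R) : Prop :=
  exists g1 g2, [/\ H10_grad Om phi g1 g2,
    (\int[leb2]_(x in Om) (phi x ^+ 2)%:E != 0)%E &
    weak_neg_laplacian Om g1 g2 (fun x => lam * phi x)].

Definition weak_dirichlet_solution (Om : set (R * R)) (f : R -> R) (phi : R * R -> R) : Prop :=
  exists g1 g2, [/\ H10_grad Om phi g1 g2, L2 Om (fun x => f (phi x)) &
    weak_neg_laplacian Om g1 g2 (fun x => f (phi x))].

Definition bounded_set2 (Om : set (R * R)) : Prop :=
  exists M : R, forall x, Om x -> `|x| <= M.

Definition I01 : set R := [set t : R | 0 <= t <= 1].

(* simply connected: path-connected (connected open) and every closed loop in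
   Omega is freely homotopic within Omega to a constant loop *)
Definition simply_connected2 (Om : set (R * R)) : Prop :=
  connected Om /\
  forall gam : R -> R * R,
    {within I01, continuous gam} -> gam @` I01 `<=` Om -> gam 0 = gam 1 ->
    exists H : R * R -> R * R,
      [/\ {within I01 `*` I01, continuous H},
          H @` (I01 `*` I01) `<=` Om,
          (forall s, 0 <= s <= 1 -> H (s, 0) = gam s),
          (forall s, 0 <= s <= 1 -> H (s, 1) = H (0, 1)) &
          (forall t, 0 <= t <= 1 -> H (0, t) = H (1, t))].

Definition C2_holder (eps : R) (h : R -> R) : Prop :=
  (forall t, derivable h t 1) /\ (forall t, derivable (derive1 h) t 1) /\
  exists C : R, forall s t, `|derive1 (derive1 h) s - derive1 (derive1 h) t| <= C * (`|s - t| `^ eps).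

(* Omega has C^{2+eps} boundary: near each boundary point, in suitably rotated
   coordinates centred at that point, Omega is the strict epigraph of a
   C^{2,eps} function *)
Definition C2eps_boundary (eps : R) (Om : set (R * R)) : Prop :=
  forall p, closure Om p -> ~ Om p ->
    exists (r c s : R) (h : R -> R),
      [/\ 0 < r, c ^+ 2 + s ^+ 2 = 1, C2_holder eps h &
        forall x, ball p r x ->
          (Om x <-> h (c * (x.1 - p.1) + s * (x.2 - p.2))
                      < - s * (x.1 - p.1) + c * (x.2 - p.2))].

End Defs.

(* Main.v *)
Require Import Defs.
From HB Require Import structures.
From mathcomp Require Import all_boot all_order all_algebra.
From mathcomp Require Import all_classical all_reals all_analysis.
From mathcomp Require Import ring lra measurable_realfun.
Import Order.TTheory GRing.Theory Num.Theory.
Import numFieldNormedType.Exports.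
Local Open Scope classical_set_scope.
Local Open Scope ring_scope.

Lemma ball2E (R : realType) (z : R * R) (e : R) :
  ball z e = (ball z.1 e) `*` (ball z.2 e).
Proof. by []. Qed.

Lemma open_meas2 (R : realType) (U : set (measurableTypeR R * measurableTypeR R)) :
  open (U : set (R * R)) -> measurable U.
Proof.
move=> oU.
pose box (i : rat * rat * nat) : set (R * R) :=
  ball ((ratr i.1.1, ratr i.1.2) : R * R) (i.2.+1%:R^-1).
pose F (i : rat * rat * nat) : set (measurableTypeR R * measurableTypeR R) :=
  [set z | box i `<=` U /\ box i z].
have -> : U = \bigcup_i F i.
  apply/seteqP; split => [z Uz|z [i _ [sU bz]]]; last exact: sU.
  have : nbhs (z : R * R) U by apply: oU.
  move=> /nbhs_ballP[e /= e0 zeU].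
  have [n ne] : exists n : nat, n.+1%:R^-1 < e / 2.
    have he2 : (0:R) < e / 2 by rewrite divr_gt0.
    have [n hn] := @ltr_add_invr R 0 (e / 2) he2.
    by exists n; rewrite add0r in hn.
  have n0 : (0 : R) < n.+1%:R^-1 by rewrite invr_gt0 ltr0Sn.
  set r := n.+1%:R^-1 in ne n0 *.
  have h1 : z.1 - r < z.1 + r by lra.
  have h2 : z.2 - r < z.2 + r by lra.
  have [a] := @rat_in_itvoo R (z.1 - r) (z.1 + r) h1.
  rewrite in_itv /= => /andP[ha1 ha2].
  have [b] := @rat_in_itvoo R (z.2 - r) (z.2 + r) h2.
  rewrite in_itv /= => /andP[hb1 hb2].
  exists (a, b, n) => //; split.
    move=> w [/= w1 w2]; apply: zeU; split => /=;
    move: w1 w2; rewrite /ball /= -/r !ltr_distl => /andP[? ?] /andP[? ?];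
     apply/andP; split; lra.
  split; rewrite /ball /= -/r ltr_distl; apply/andP; split; lra.
apply: countable_bigcupT_measurable => // i.
have [sU|nsU] := pselect (box i `<=` U).
  rewrite (_ : F i = box i); last by apply/seteqP; split => z //= [].
  rewrite /box ball2E; apply: measurableX; exact: measurable_ball.
rewrite (_ : F i = set0) //; by apply/seteqP; split => z //= [].
Qed.

Lemma cont_mfun (R : realType) (D : set (measurableTypeR R * measurableTypeR R))
  (f : R * R -> R) : measurable D -> continuous f -> measurable_fun D f.
Proof.
move=> mD /continuousP cf; apply: (measurability _ (RGenOpens.measurableE R)).
move=> _ [_ [a [b ->] <-]]; apply: measurableI => //; apply: open_meas2.
exact/cf/interval_open.
Qed.

Section generic.
Context d (T : measurableType d) (R : realType) (mu : {measure set T -> \bar R}).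
Variables (D : set T) (mD : measurable D).

Definition L2g (f : T -> R) :=
  measurable_fun D f /\ mu.-integrable D (fun x => (f x ^+ 2)%:E).

Lemma amgm (c a b : R) : 0 < c -> `|a * b| <= (c * a ^+ 2 + c^-1 * b ^+ 2) / 2.
Proof.
move=> c0; have cn : c != 0 by rewrite gt_eqF.
have ci : 0 < c^-1 by rewrite invr_gt0.
have e1 : c^-1 * (c * a + b) ^+ 2 = c * a ^+ 2 + 2 * a * b + c^-1 * b ^+ 2 by field.
have e2 : c^-1 * (c * a - b) ^+ 2 = c * a ^+ 2 - 2 * a * b + c^-1 * b ^+ 2 by field.
have p1 : 0 <= c^-1 * (c * a + b) ^+ 2 by apply: mulr_ge0; [exact: ltW | exact: sqr_ge0].
have p2 : 0 <= c^-1 * (c * a - b) ^+ 2 by apply: mulr_ge0; [exact: ltW | exact: sqr_ge0].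
rewrite ler_norml; apply/andP; split; lra.
Qed.

Lemma absM_le (a b : R) : `|a * b| <= a ^+ 2 + b ^+ 2.
Proof.
apply: (le_trans (amgm 1 a b (@ltr01 R))); rewrite invr1 !mul1r.
have := sqr_ge0 a; have := sqr_ge0 b; lra.
Qed.

Lemma L2_mul_int u v : L2g u -> L2g v ->
  mu.-integrable D (EFin \o (fun x => u x * v x)).
Proof.
move=> [mu' iu] [mv iv].
apply: (le_integrable mD _ _ (integrableD mD iu iv)).
- by apply/measurable_EFinP; exact: measurable_funM.
- move=> x Dx /=; rewrite lee_fin [X in _ <= X]ger0_norm ?addr_ge0 ?sqr_ge0 //.
  exact: absM_le.
Qed.

Lemma intZ k f : mu.-integrable D (EFin \o f) ->
  mu.-integrable D (EFin \o (fun x => k * f x)).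
Proof.
move=> /(integrableZl mD k); apply: eq_integrable => //.
Qed.

Lemma intD f g : mu.-integrable D (EFin \o f) -> mu.-integrable D (EFin \o g) ->
  mu.-integrable D (EFin \o (fun x => f x + g x)).
Proof.
move=> hf hg; have := integrableD mD hf hg; apply: eq_integrable => //.
Qed.

Lemma KL (F G : nat -> T -> R) f v :
  (forall n, measurable_fun D (F n)) -> (forall n, measurable_fun D (G n)) ->
  L2g f -> L2g v ->
  (forall n x, D x -> (F n x - f x) ^+ 2 <= G n x) ->
  (fun n => \int[mu]_(x in D) (G n x)%:E)%E @ \oo --> 0%E ->
  (\forall n \near \oo, mu.-integrable D (EFin \o (fun x => v x * F n x))) /\
  (fun n => Rintegral mu D (fun x => v x * F n x)) @ \oo
     --> Rintegral mu D (fun x => v x * f x).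
Proof.
move=> mF mG [mf iff] [mv iv] FG /fine_cvgP[finG cGr].
have G0 n x : D x -> 0 <= G n x.
  by move=> Dx; apply: le_trans (FG n x Dx); exact: sqr_ge0.
have intG : \forall n \near \oo, mu.-integrable D (EFin \o G n).
  near=> n; apply/integrableP; split; first exact/measurable_EFinP.
  have : (\int[mu]_(x in D) (G n x)%:E)%E \is a fin_num by near: n.
  rewrite ge0_fin_numE; last by apply: integral_ge0 => x Dx; rewrite lee_fin G0.
  apply: le_lt_trans; rewrite le_eqVlt; apply/orP; left; apply/eqP.
  by apply: eq_integral => x /[1!inE] Dx /=; rewrite ger0_norm // G0.
have key : \forall n \near \oo, L2g (fun x => F n x - f x).
  near=> n; split; first exact: measurable_funB.
  apply: (le_integrable mD _ _ (_ : mu.-integrable D (EFin \o G n))).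
  - by apply/measurable_EFinP; apply: measurable_funX; exact: measurable_funB.
  - move=> x Dx /=; rewrite lee_fin !ger0_norm ?sqr_ge0 ?G0 //; exact: FG.
  - by near: n.
have intvf := @L2_mul_int v f (conj mv iv) (conj mf iff).
have intw : \forall n \near \oo,
    mu.-integrable D (EFin \o (fun x => v x * (F n x - f x))).
  by near=> n; apply: L2_mul_int; [exact: conj mv iv|near: n].
have intvF : \forall n \near \oo, mu.-integrable D (EFin \o (fun x => v x * F n x)).
  near=> n.
  have h1 : mu.-integrable D (EFin \o (fun x => v x * (F n x - f x))) by near: n.
  have := @intD _ _ intvf h1; apply: eq_integrable => // x _ /=.
  by rewrite mulrBr addrC subrK.
split => //.
apply/cvgrPdist_lt => e e0.
set V := Rintegral mu D (fun x => v x ^+ 2).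
have V0 : 0 <= V by apply: Rintegral_ge0 => x _; exact: sqr_ge0.
have V1 : 0 < V + 1 by lra.
set c := e / (V + 1).
have c0 : 0 < c by apply: divr_gt0.
have hc : c * (V + 1) = e by rewrite /c divfK // gt_eqF.
have cV : c * V < e by move: hc; rewrite mulrDr mulr1; lra.
move/cvgrPdist_lt : cGr => /(_ (e * c) (mulr_gt0 e0 c0)) nearG.
near=> n.
have iw : mu.-integrable D (EFin \o (fun x => v x * (F n x - f x))) by near: n.
have iG : mu.-integrable D (EFin \o G n) by near: n.
have ivFn : mu.-integrable D (EFin \o (fun x => v x * F n x)) by near: n.
have hG : `|0 - fine (\int[mu]_(x in D) (G n x)%:E)%E| < e * c by near: n.
set g := fine (\int[mu]_(x in D) (G n x)%:E)%E in hG.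
have gc : c^-1 * g < e.
  rewrite mulrC ltr_pdivrMr //; move: hG; rewrite sub0r normrN => /ltr_normlW.
  by rewrite mulrC.
rewrite distrC -RintegralB //.
have -> : Rintegral mu D (fun x => v x * F n x - v x * f x) =
    Rintegral mu D (fun x => v x * (F n x - f x)).
  by apply: eq_Rintegral => x _; rewrite mulrBr.
apply: le_lt_trans (le_normr_Rintegral mD iw) _.
have ib : mu.-integrable D (EFin \o (fun x => c / 2 * v x ^+ 2 + c^-1 / 2 * G n x)).
  by apply: intD; apply: intZ.
apply: le_lt_trans (le_Rintegral mD (integrable_norm iw) ib _) _.
  move=> x Dx /=; have := amgm c (v x) (F n x - f x) c0.
  have := FG n x Dx; have ci : 0 < c^-1 by rewrite invr_gt0.
  move=> h h2; have : c^-1 * (F n x - f x) ^+ 2 <= c^-1 * G n x by rewrite ler_pM2l.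
  lra.
rewrite RintegralD //; try by apply: intZ.
rewrite RintegralZl // RintegralZl //.
rewrite -/V -/g.
have -> : Rintegral mu D (fun x => G n x) = g by []. lra.
Unshelve. all: by end_near.
Qed.
End generic.


Local Notation T2 R := (measurableTypeR R * measurableTypeR R)%type.

Lemma test_meas (R : realType) (Om : set (T2 R)) (p : R * R -> R) :
  measurable Om -> test_fun Om p ->
  [/\ measurable_fun Om p, measurable_fun Om ('D_(e1 R) p) & measurable_fun Om ('D_(e2 R) p)].
Proof.
move=> mOm [sp _]; split; apply: cont_mfun => // x;
  apply: differentiable_continuous.
- exact: (sp [::] x).
- exact: (sp [:: e1 R] x).
- exact: (sp [:: e2 R] x).
Qed.

Lemma side (R : realType) (Om : set (T2 R)) (u g1 g2 v1 v2 w : R * R -> R)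
    (psi : nat -> R * R -> R) :
  measurable Om ->
  L2 Om u -> L2 Om g1 -> L2 Om g2 -> L2 Om v1 -> L2 Om v2 -> L2 Om w ->
  (forall n, test_fun Om (psi n)) ->
  (fun n => (\int[(@leb2 R)]_(x in Om) ((psi n x - u x) ^+ 2
      + ('D_(e1 R) (psi n) x - g1 x) ^+ 2
      + ('D_(e2 R) (psi n) x - g2 x) ^+ 2)%:E)%E) @ \oo --> 0%E ->
  (forall n, Rintegral (@leb2 R) Om (fun x => v1 x * 'D_(e1 R) (psi n) x
        + v2 x * 'D_(e2 R) (psi n) x)
     = Rintegral (@leb2 R) Om (fun x => w x * psi n x)) ->
  Rintegral (@leb2 R) Om (fun x => v1 x * g1 x) + Rintegral (@leb2 R) Om (fun x => v2 x * g2 x)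
  = Rintegral (@leb2 R) Om (fun x => w x * u x).
Proof.
move=> mOm [mu iu] [mg1 ig1] [mg2 ig2] Lv1 Lv2 Lw tp cv eqn.
set G := fun n x => (psi n x - u x) ^+ 2
      + ('D_(e1 R) (psi n) x - g1 x) ^+ 2 + ('D_(e2 R) (psi n) x - g2 x) ^+ 2.
have mp n := @test_meas _ _ _ mOm (tp n).
have mG n : measurable_fun Om (G n).
  have [m0 m1 m2] := mp n.
  by apply: measurable_funD; [apply: measurable_funD|]; apply: measurable_funX;
    apply: measurable_funB.
have m0 n : measurable_fun Om (psi n) by have [] := mp n.
have m1 n : measurable_fun Om ('D_(e1 R) (psi n)) by have [] := mp n.
have m2 n : measurable_fun Om ('D_(e2 R) (psi n)) by have [] := mp n.
have FG0 n x : Om x -> (psi n x - u x) ^+ 2 <= G n x.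
  move=> _; rewrite /G; have := sqr_ge0 ('D_(e1 R) (psi n) x - g1 x);
  have := sqr_ge0 ('D_(e2 R) (psi n) x - g2 x); lra.
have FG1 n x : Om x -> ('D_(e1 R) (psi n) x - g1 x) ^+ 2 <= G n x.
  move=> _; rewrite /G; have := sqr_ge0 (psi n x - u x);
  have := sqr_ge0 ('D_(e2 R) (psi n) x - g2 x); lra.
have FG2 n x : Om x -> ('D_(e2 R) (psi n) x - g2 x) ^+ 2 <= G n x.
  move=> _; rewrite /G; have := sqr_ge0 ('D_(e1 R) (psi n) x - g1 x);
  have := sqr_ge0 (psi n x - u x); lra.
have [i1 c1] := @KL _ _ _ (@leb2 R) Om mOm _ G g1 v1 m1 mG (conj mg1 ig1) Lv1 FG1 cv.
have [i2 c2] := @KL _ _ _ (@leb2 R) Om mOm _ G g2 v2 m2 mG (conj mg2 ig2) Lv2 FG2 cv.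
have [_ c0] := @KL _ _ _ (@leb2 R) Om mOm _ G u w m0 mG (conj mu iu) Lw FG0 cv.
have lim1 := cvgD c1 c2.
have lim3 : (fun n => Rintegral (@leb2 R) Om (fun x => w x * psi n x)) @ \oo -->
   Rintegral (@leb2 R) Om (fun x => v1 x * g1 x) + Rintegral (@leb2 R) Om (fun x => v2 x * g2 x).
  have E' : {near \oo, 
      (fun n => Rintegral (@leb2 R) Om (fun x => v1 x * 'D_(e1 R) (psi n) x)
      + Rintegral (@leb2 R) Om (fun x => v2 x * 'D_(e2 R) (psi n) x)) =1
     (fun n => Rintegral (@leb2 R) Om (fun x => w x * psi n x))}.
    near=> n; rewrite /= -eqn RintegralD //; [by near: n|by near: n].
  apply: cvg_trans (near_eq_cvg E') _; exact: lim1.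
exact: (cvg_unique _ lim3 c0).
Unshelve. all: by end_near.
Qed.

Arguments intD {d T R mu D} mD {f g}.
Arguments intZ {d T R mu D} mD k {f}.

Lemma ptw1 (R : realType) (A B t p : R) : A < t < B ->
  A * Order.max p 0 + B * Order.min p 0 <= t * p.
Proof.
move=> /andP[h1 h2]; have [hp|hp] := lerP 0 p; nra.
Qed.

Lemma ptw2 (R : realType) (A B t p : R) : A < t < B ->
  t * p <= B * Order.max p 0 + A * Order.min p 0.
Proof.
move=> /andP[h1 h2]; have [hp|hp] := lerP 0 p; nra.
Qed.

Lemma restr_max (R : realType) (U : Type) (f : U -> R) x :
  (f \_ [set y | 0 < f y]) x = Order.max (f x) 0.
Proof.
rewrite /patch; case: ifPn => [/set_mem /= h|h].
  by rewrite max_l // ltW.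
rewrite max_r //; rewrite leNgt; apply/negP => h'; move/negP: h; apply.
exact/mem_set.
Qed.

Lemma restr_min (R : realType) (U : Type) (f : U -> R) x :
  (f \_ [set y | f y < 0]) x = Order.min (f x) 0.
Proof.
rewrite /patch; case: ifPn => [/set_mem /= h|h].
  by rewrite min_l // ltW.
rewrite min_r //; rewrite leNgt; apply/negP => h'; move/negP: h; apply.
exact/mem_set.
Qed.

Theorem proposition4p4 (R : realType) (Om : set (R * R)) (eps : R)
  (lam : R) (phi_j : R * R -> R) :
  open Om -> bounded_set2 Om -> simply_connected2 Om ->
  0 < eps < 1 -> C2eps_boundary eps Om ->
  dirichlet_eigenpair Om lam phi_j ->
  Rintegral (@leb2 R) [set x | Om x /\ 0 < phi_j x] phi_j
    != - Rintegral (@leb2 R) [set x | Om x /\ phi_j x < 0] phi_j ->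
  exists A B : R, 0 < A < B /\
    forall vt : R -> R, (forall eta, A < vt eta < B) ->
      ~ exists phi : R * R -> R,
          weak_dirichlet_solution Om (fun eta => lam * eta + vt eta) phi.
Proof.
move=> oOm _ _ _ _ [g1 [g2 [[[Lphij [Lg1 Lg2]] _ _ [a [ta ca]]] _ Eeig]]] hP.
have mOm : measurable (Om : set (measurableTypeR R * measurableTypeR R)).
  exact: open_meas2.
set Pp := Rintegral (@leb2 R) [set x | Om x /\ 0 < phi_j x] phi_j in hP *.
set Pm := Rintegral (@leb2 R) [set x | Om x /\ phi_j x < 0] phi_j in hP *.
have Llj : L2 Om (fun x => lam * phi_j x).
  case: Lphij => mp ip; split; first exact: measurable_funM.
  have := integrableZl mOm (lam ^+ 2) ip; apply: eq_integrable => // x _ /=.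
  by rewrite -EFinM exprMn.
have core : forall A B vt, 0 < A -> (forall eta, A < vt eta < B) ->
    (exists phi, weak_dirichlet_solution Om (fun eta => lam * eta + vt eta) phi) ->
    A * Pp + B * Pm <= 0 /\ 0 <= B * Pp + A * Pm.
  move=> A B vt A0 hvt [phi [h1 [h2 [[[Lphi [Lh1 Lh2]] _ _ [b [tb cb]]] LF Sol]]]].
  have R1 := @side R Om phi h1 h2 g1 g2 (fun x => lam * phi_j x) b mOm
     Lphi Lh1 Lh2 Lg1 Lg2 Llj tb cb (fun n => Eeig (b n) (tb n)).
  have R2 := @side R Om phi_j g1 g2 h1 h2 (fun x => lam * phi x + vt (phi x)) a mOm
     Lphij Lg1 Lg2 Lh1 Lh2 LF ta ca (fun n => Sol (a n) (ta n)).
  have iF := @L2_mul_int _ _ _ (@leb2 R) Om mOm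
    (fun x => lam * phi x + vt (phi x)) phi_j LF Lphij.
  have iL := @L2_mul_int _ _ _ (@leb2 R) Om mOm (fun x => lam * phi_j x) phi Llj Lphi.
  have iw : (@leb2 R).-integrable Om (EFin \o (fun x => vt (phi x) * phi_j x)).
    have := intD mOm iF (intZ mOm (-1) iL); apply: eq_integrable => // x _ /=.
    by congr EFin; ring.
  have W0 : Rintegral (@leb2 R) Om (fun x => vt (phi x) * phi_j x) = 0.
    have -> : Rintegral (@leb2 R) Om (fun x => vt (phi x) * phi_j x) =
      Rintegral (@leb2 R) Om (fun x => (lam * phi x + vt (phi x)) * phi_j x
                                      - lam * phi_j x * phi x).
      by apply: eq_Rintegral => x _; ring.
    rewrite RintegralB // -R1 -R2.
    have -> : Rintegral (@leb2 R) Om (fun x => h1 x * g1 x)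
        = Rintegral (@leb2 R) Om (fun x => g1 x * h1 x).
      by apply: eq_Rintegral => x _; rewrite mulrC.
    have -> : Rintegral (@leb2 R) Om (fun x => h2 x * g2 x)
        = Rintegral (@leb2 R) Om (fun x => g2 x * h2 x).
      by apply: eq_Rintegral => x _; rewrite mulrC.
    by rewrite subrr.
  have mpj : measurable_fun Om phi_j by case: Lphij.
  have iphi : (@leb2 R).-integrable Om (EFin \o phi_j).
    apply: (le_integrable mOm _ _ (intZ mOm A^-1 iw)).
      exact/measurable_EFinP.
    have Ai : 0 <= A^-1 by rewrite invr_ge0 ltW.
    move=> x _ /=; rewrite lee_fin normrM normrM (ger0_norm Ai) mulrA.
    have /andP[hA _] := hvt (phi x).
    apply: ler_peMl => //; rewrite ger0_norm; last by lra.
    by rewrite ler_pdivlMl // mulr1 ltW.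
  have imax : (@leb2 R).-integrable Om (EFin \o (fun x => Order.max (phi_j x) 0)).
    apply: (le_integrable mOm _ _ iphi).
      by apply/measurable_EFinP; apply: measurable_maxr => //; exact: measurable_cst.
    move=> x _ /=; rewrite lee_fin; have [hp|hp] := lerP 0 (phi_j x) => //.
    by rewrite normr0.
  have imin : (@leb2 R).-integrable Om (EFin \o (fun x => Order.min (phi_j x) 0)).
    apply: (le_integrable mOm _ _ iphi).
      by apply/measurable_EFinP; apply: measurable_minr => //; exact: measurable_cst.
    move=> x _ /=; rewrite lee_fin; have [hp|hp] := lerP 0 (phi_j x) => //.
    by rewrite normr0.
  have ePp : Pp = Rintegral (@leb2 R) Om (fun x => Order.max (phi_j x) 0).
    rewrite /Pp -[LHS]/(Rintegral (@leb2 R) (Om `&` [set x | 0 < phi_j x]) phi_j).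
    rewrite Rintegral_mkcondr.
    by apply: eq_Rintegral => x _; exact: restr_max.
  have ePm : Pm = Rintegral (@leb2 R) Om (fun x => Order.min (phi_j x) 0).
    rewrite /Pm -[LHS]/(Rintegral (@leb2 R) (Om `&` [set x | phi_j x < 0]) phi_j).
    rewrite Rintegral_mkcondr.
    by apply: eq_Rintegral => x _; exact: restr_min.
  split.
    have := le_Rintegral mOm (intD mOm (intZ mOm A imax) (intZ mOm B imin)) iw
      (fun x _ => @ptw1 R A B (vt (phi x)) (phi_j x) (hvt (phi x))).
    rewrite W0 RintegralD //; try by apply: intZ.
    by rewrite !RintegralZl // -ePp -ePm.
  have := le_Rintegral mOm iw (intD mOm (intZ mOm B imax) (intZ mOm A imin))
      (fun x _ => @ptw2 R A B (vt (phi x)) (phi_j x) (hvt (phi x))).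
  rewrite W0 RintegralD //; try by apply: intZ.
  by rewrite !RintegralZl // -ePp -ePm.
move: hP; rewrite neq_lt => /orP[h|h].
- set k := (2 * (`|Pp| + 1))^-1.
  have k0 : 0 < k by rewrite invr_gt0; have := normr_ge0 Pp; lra.
  have e : 2 * (`|Pp| + 1) * k = 1 by rewrite mulfV // gt_eqF //; have := normr_ge0 Pp; lra.
  have hn : Pp <= `|Pp| := ler_norm Pp.
  have tk : Pp * k < 1 by nra.
  exists 1, (1 + (- Pm - Pp) * k); split.
    by apply/andP; split; [exact: ltr01|]; nra.
  move=> vt hvt hsol; have [_ c2] := core _ _ _ ltr01 hvt hsol.
  nra.
- set k := (2 * (`|Pm| + 1))^-1.
  have k0 : 0 < k by rewrite invr_gt0; have := normr_ge0 Pm; lra.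
  have e : 2 * (`|Pm| + 1) * k = 1 by rewrite mulfV // gt_eqF //; have := normr_ge0 Pm; lra.
  have hn : - Pm <= `|Pm| by rewrite -normrN; exact: ler_norm.
  have tk : -1 < Pm * k by nra.
  exists 1, (1 + (Pp + Pm) * k); split.
    by apply/andP; split; [exact: ltr01|]; nra.
  move=> vt hvt hsol; have [c1 _] := core _ _ _ ltr01 hvt hsol.
  nra.
Qed.
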